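(* Let $\omega(r)=\exp(\varepsilon r)$ and $\Omega(r)=\exp(\delta r)$, where $\delta>\varepsilon>0$. Then for each $r>0$ there exists $R>0$ such that $\omega^n(R)\ge\Omega^n(r)$ for all $n\in\mathbb N$.
   Context: $\omega^n,\Omega^n$ denote $n$-th iterates. *)

(* Defs.v *)
From Stdlib Require Import Reals.
Open Scope R_scope.

Definition iterR (n : nat) (f : R -> R) (x : R) : R := Nat.iter n f x.

(* Main.v *)
Require Import Defs.
From Stdlib Require Import Reals Lra Psatz.
Open Scope R_scope.

Theorem lemma3p3 (eps delta : R) (heps : 0 < eps) (hed : eps < delta) :
  forall r : R, 0 < r ->
  exists R0 : R, 0 < R0 /\
    forall n : nat,
      iterR n (fun x => exp (eps * x)) R0 >= iterR n (fun x => exp (delta * x)) r.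
Proof.
  intros r hr.
  set (K := 4 * (delta + 1) / eps).
  assert (HK : eps * K = 4 * (delta + 1)) by (unfold K; field; lra).
  assert (HK1 : 4 < K).
  { assert (eps * K > eps * 4) by nra. nra. }
  assert (Hc : eps * exp K >= delta + K).
  { assert (H1 := exp_ineq1 (K/2) ltac:(lra)).
    assert (H2 : exp K = exp (K/2) * exp (K/2)) by (rewrite <- exp_plus; f_equal; lra).
    assert (exp K >= (1 + K/2) * (1 + K/2)) by nra.
    assert (eps * (K*K/4) = K * (delta+1)) by nra.
    nra. }
  exists ((delta * r + K) / eps). split.
  { apply Rdiv_lt_0_compat; nra. }
  assert (Hinv : forall n, eps * iterR n (fun x => exp (eps * x)) ((delta * r + K) / eps)
            >= delta * iterR n (fun x => exp (delta * x)) r + K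
            /\ 0 < iterR n (fun x => exp (delta * x)) r).
  { induction n as [|n [IH1 IH2]].
    - simpl. split; [|lra]. right. field. lra.
    - unfold iterR in *. simpl.
      set (x := Nat.iter n (fun x => exp (eps * x)) ((delta * r + K) / eps)) in *.
      set (y := Nat.iter n (fun x => exp (delta * x)) r) in *.
      assert (Ey : exp (delta * y) >= 1).
      { assert (0 < delta * y) by nra. left. rewrite <- exp_0. apply exp_increasing. lra. }
      assert (exp (eps * x) >= exp (delta * y + K)).
      { destruct (Req_dec (eps * x) (delta * y + K)) as [E|E].
        - rewrite E; lra.
        - left. apply exp_increasing. lra. }
      rewrite exp_plus in H.
      split.
      + assert (exp (delta * y) * (eps * exp K) >= exp (delta * y) * (delta + K)) by nra.
        nra.
      + apply exp_pos. }
  intro n. destruct (Hinv n) as [H1 H2].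
  assert (0 < delta) by lra. nra.
Qed.
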